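(* Let $C$ be a choice function. Then $C$ is consistent if and only if $\emptyset\notin\mathrm{Ex}(\mathcal{A}_C)$. Moreover, if $C$ is consistent, then $C_{\mathrm{Ex}(\mathcal{A}_C)}(A)=\mathrm{Ex}(C)(A)$ for all $A\in\mathscr{Q}$.
   Context: Let $\mathcal{X}$ be a nonempty set and let $\mathscr{V}$ be the real vector space of all functions $u:\mathcal{X}\to\mathbb{R}$ (options), with pointwise operations. For $u,v\in\mathscr{V}$, $u\le v$ iff $u(x)\le v(x)$ for all $x\in\mathcal{X}$, and $u<v$ iff $u\le v$ and $u\neq v$. Let $\mathscr{V}_{>0}=\{u\in\mathscr{V}:0<u\}$ and $\mathscr{V}^s_{>0}=\{\{u\}:u\in\mathscr{V}_{>0}\}$. Let $\mathscr{Q}$ be the set of all finite subsets of $\mathscr{V}$ (including $\emptyset$). For $A\in\mathscr{Q}$ and $u\in\mathscr{V}$, $A-u=\{v-u:v\in A\}$. For a positive integer $n$, $\mathbb{R}^{n,+}=\{\boldsymbol\lambda\in\mathbb{R}^n:\lambda_j\ge0\ \forall j,\ \sum_j\lambda_j>0\}$, and for $\boldsymbol\lambda\in\mathbb{R}^n$, $\mathbf u=(u_1,\dots,u_n)\in\mathscr{V}^n$, $\boldsymbol\lambda\mathbf u=\sum_{j=1}^n\lambda_ju_j$. A choice function is a map $C:\mathscr{Q}\to\mathscr{Q}$ with $C(A)\subseteq A$ for all $A$; its rejection function is $R_C(A)=A\setminus C(A)$, and $K_C=\{A\in\mathscr{Q}:0\notin C(A\cup\{0\})\}$. $C$ is coherent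 if: (C0) $C(A)\neq\emptyset$ for all nonempty $A\in\mathscr{Q}$; (C1) for all $A\in\mathscr{Q}$ and $u\in A$: $u\in C(A)\iff 0\in C(A-u)$; (C2) $\{u\}\in K_C$ for all $u\in\mathscr{V}_{>0}$; (C3) for all $A,B\in K_C$ and all maps $\boldsymbol\lambda:A\times B\to\mathbb{R}^{2,+}$, $\{\boldsymbol\lambda(\mathbf u)\mathbf u:\mathbf u\in A\times B\}\in K_C$; (C4) $A\subseteq B\Rightarrow R_C(A)\subseteq R_C(B)$ for all $A,B\in\mathscr{Q}$. $\mathcal{C}$ denotes the set of coherent choice functions. For a choice function $C$, $\mathcal C_C=\{C'\in\mathcal C: C'(A)\subseteq C(A)\text{ for all }A\in\mathscr{Q}\}$; $C$ is called consistent if $\mathcal C_C\neq\emptyset$; and $\mathrm{Ex}(C)(A)=\bigcup_{C'\in\mathcal C_C}C'(A)$ for all $A\in\mathscr{Q}$ (an empty union being $\emptyset$). A set of desirable option sets is any $K\subseteq\mathscr{Q}$. It is coherent if for all $A,B\in K$: (K0) $A\setminus\{0\}\in K$; (K1) $\{0\}\notin K$; (K2) $\mathscr{V}^s_{>0}\subseteq K$; (K3) $\{\boldsymbol\lambda(\mathbf u)\mathbf u:\mathbf u\in A\times B\}\in K$ for every map $\boldsymbol\lambda:A\times B\to\mathbb{R}^{2,+}$; (K4) $A\cup Q\in K$ for all $Q\in\mathscr{Q}$. $\bar{\mathbf K}$ denotes the set of coherent sets of desirable option sets. For $K\subseteq\mathscr{Q}$, the choice function $C_K$ is defined by $C_K(A)=\{u\in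 A:(A-u)\setminus\{0\}\notin K\}$. An assessment is any subset $\mathcal{A}\subseteq\mathscr{Q}$. Let $\bar{\mathbf K}(\mathcal A)=\{K\in\bar{\mathbf K}:\mathcal A\subseteq K\}$ and $\mathrm{Ex}(\mathcal A)=\bigcap\bar{\mathbf K}(\mathcal A)$, with the convention $\bigcap\emptyset=\mathscr{Q}$. For a choice function $C$, $\mathcal A_C=\{C(A)-u:A\in\mathscr{Q},\ u\in R_C(A)\}$. *)

(* Defs.v *)
From Stdlib Require Import Reals List.
Open Scope R_scope.

Section Defs.
Variable X : Type.

Definition V := X -> R.
Definition vzero : V := fun _ => 0.
Definition vsub (u v : V) : V := fun x => u x - v x.
Definition vlc (a : R) (u : V) (b : R) (w : V) : V := fun x => a * u x + b * w x.

Definition vle (u v : V) : Prop := forall x, u x <= v x.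
Definition vlt (u v : V) : Prop := vle u v /\ u <> v.
Definition Vpos (u : V) : Prop := vlt vzero u.

(* option sets; Q = finite option sets *)
Definition oset := V -> Prop.
Definition finite_oset (A : oset) : Prop := exists l : list V, forall v, A v <-> In v l.
Definition subset (A B : oset) : Prop := forall v, A v -> B v.
Definition single (u : V) : oset := fun v => v = u.
Definition setU (A B : oset) : oset := fun v => A v \/ B v.
Definition setD (A B : oset) : oset := fun v => A v /\ ~ B v.
Definition shift (A : oset) (u : V) : oset := fun w => exists v, A v /\ w = vsub v u.
Definition empty_oset : oset := fun _ => False.
Definition nonempty (A : oset) : Prop := exists v, A v.

Definition R2plus (a b : R) : Prop := 0 <= a /\ 0 <= b /\ 0 < a + b.

(* {lambda(u) u : u in A x B}, lambda given by two real coordinate maps *)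
Definition combo (A B : oset) (l1 l2 : V -> V -> R) : oset :=
  fun w => exists u v, A u /\ B v /\ w = vlc (l1 u v) u (l2 u v) v.

(* choice functions: only their values on Q matter *)
Definition choice_fun (C : oset -> oset) : Prop :=
  forall A, finite_oset A -> subset (C A) A.
Definition rej (C : oset -> oset) (A : oset) : oset := setD A (C A).
Definition KC (C : oset -> oset) (A : oset) : Prop :=
  finite_oset A /\ ~ C (setU A (single vzero)) vzero.

Definition coherent_choice (C : oset -> oset) : Prop :=
  choice_fun C /\
  (* C0 *) (forall A, finite_oset A -> nonempty A -> nonempty (C A)) /\
  (* C1 *) (forall A u, finite_oset A -> A u -> (C A u <-> C (shift A u) vzero)) /\
  (* C2 *) (forall u, Vpos u -> KC C (single u)) /\
  (* C3 *) (forall A B (l1 l2 : V -> V -> R), KC C A -> KC C B ->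
              (forall u v, A u -> B v -> R2plus (l1 u v) (l2 u v)) ->
              KC C (combo A B l1 l2)) /\
  (* C4 *) (forall A B, finite_oset A -> finite_oset B -> subset A B ->
              subset (rej C A) (rej C B)).

Definition dominated (C' C : oset -> oset) : Prop :=
  forall A, finite_oset A -> subset (C' A) (C A).
Definition consistent (C : oset -> oset) : Prop :=
  exists C', coherent_choice C' /\ dominated C' C.
Definition ExC (C : oset -> oset) (A : oset) : oset :=
  fun u => exists C', coherent_choice C' /\ dominated C' C /\ C' A u.

Definition sdos := oset -> Prop.
Definition coherent_K (K : sdos) : Prop :=
  (forall A, K A -> finite_oset A) /\
  (* K0 *) (forall A, K A -> K (setD A (single vzero))) /\
  (* K1 *) ~ K (single vzero) /\
  (* K2 *) (forall u, Vpos u -> K (single u)) /\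
  (* K3 *) (forall A B (l1 l2 : V -> V -> R), K A -> K B ->
              (forall u v, A u -> B v -> R2plus (l1 u v) (l2 u v)) ->
              K (combo A B l1 l2)) /\
  (* K4 *) (forall A Q, K A -> finite_oset Q -> K (setU A Q)).

Definition CK (K : sdos) (A : oset) : oset :=
  fun u => A u /\ ~ K (setD (shift A u) (single vzero)).

(* Ex(assessment) = intersection of coherent K containing it; empty intersection = Q *)
Definition ExA (Asm : sdos) : sdos :=
  fun B => finite_oset B /\ forall K, coherent_K K -> (forall A, Asm A -> K A) -> K B.

Definition AC (C : oset -> oset) : sdos :=
  fun B => exists A u, finite_oset A /\ rej C A u /\ B = shift (C A) u.

End Defs.
Arguments vzero {X}.
Arguments choice_fun {X} C.
Arguments consistent {X} C.
Arguments ExA {X} Asm _.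
Arguments AC {X} C _.
Arguments CK {X} K A _.
Arguments ExC {X} C A _.
Arguments finite_oset {X} A.
Arguments coherent_choice {X} C.
Arguments coherent_K {X} K.

(* Main.v *)
Require Import Defs.
From Stdlib Require Import Reals List.
From Stdlib Require Import Classical FunctionalExtensionality PropExtensionality ClassicalEpsilon Lra.

Local Arguments shift {X}. Local Arguments setD {X}. Local Arguments single {X}.
Local Arguments setU {X}. Local Arguments subset {X}. Local Arguments combo {X}.
Local Arguments vsub {X}. Local Arguments vlc {X}. Local Arguments KC {X}.
Local Arguments rej {X}. Local Arguments dominated {X}. Local Arguments Vpos {X}.
Local Arguments nonempty {X}.

Section Main.
Variable X : Type.

Local Notation D A u := (setD (shift A u) (single vzero)).

Lemma seteq (A B : oset X) : (forall v, A v <-> B v) -> A = B.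
Proof. intros H; apply functional_extensionality; intros v; apply propositional_extensionality; apply H. Qed.

Lemma vext (u v : V X) : (forall x, u x = v x) -> u = v.
Proof. intros H; apply functional_extensionality; exact H. Qed.

Lemma vsub0 (u v : V X) : vsub v u = vzero -> v = u.
Proof. intros E; apply vext; intros x. assert (Ex := f_equal (fun f => f x) E).
  simpl in Ex; unfold vsub, vzero in Ex. lra. Qed.

Lemma fin_sub (A B : oset X) : finite_oset A -> subset B A -> finite_oset B.
Proof. intros [l Hl] Hs.
  exists (filter (fun x => if excluded_middle_informative (B x) then true else false) l).
  intros v. rewrite filter_In. destruct (excluded_middle_informative (B v)); split; intros H.
  - split; [apply Hl; apply Hs; exact H | reflexivity].
  - exact b.
  - contradiction.
  - destruct H; discriminate.
Qed.

Lemma fin_shift (A : oset X) u : finite_oset A -> finite_oset (shift A u).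
Proof. intros [l Hl]. exists (map (fun v => vsub v u) l). intros w. rewrite in_map_iff. split.
  - intros [v [Hv ->]]. exists v; split; [reflexivity| apply Hl; exact Hv].
  - intros [v [<- Hv]]. exists v; split; [apply Hl; exact Hv | reflexivity].
Qed.

Lemma fin_U (A B : oset X) : finite_oset A -> finite_oset B -> finite_oset (setU A B).
Proof. intros [la Ha] [lb Hb]. exists (la ++ lb). intros v; unfold setU.
  rewrite Ha, Hb, in_app_iff; tauto. Qed.

Lemma fin_single (u : V X) : finite_oset (single u).
Proof. exists (u :: nil). intros v; simpl; unfold single; split.
  - intros ->; left; reflexivity.
  - intros [->|[]]; reflexivity. Qed.

Lemma fin_empty : finite_oset (empty_oset X).
Proof. exists nil; simpl; unfold empty_oset; tauto. Qed.

Lemma fin_combo (A B : oset X) l1 l2 : finite_oset A -> finite_oset B -> finite_oset (combo A B l1 l2).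
Proof. intros [la Ha] [lb Hb].
  exists (map (fun p => vlc (l1 (fst p) (snd p)) (fst p) (l2 (fst p) (snd p)) (snd p)) (list_prod la lb)).
  intros w; rewrite in_map_iff. split.
  - intros (u & v & Hu & Hv & ->). exists (u,v). split; [reflexivity|].
    apply in_prod; [apply Ha|apply Hb]; assumption.
  - intros ([u v] & <- & Hp). apply in_prod_iff in Hp as [Hu Hv]. exists u, v. simpl.
    repeat split; [apply Ha|apply Hb]; auto.
Qed.

Lemma shift0 (A : oset X) : shift A vzero = A.
Proof. apply seteq; intros w; split.
  - intros [v [Hv ->]]. replace (vsub v vzero) with v; auto. apply vext; intros x; unfold vsub, vzero; ring.
  - intros Hw. exists w; split; auto. apply vext; intros x; unfold vsub, vzero; ring.
Qed.

Lemma K_super (K : sdos X) : coherent_K K -> forall A Q, K A -> finite_oset Q -> subset A Q -> K Q.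
Proof. intros HK A Q HA HQ Hs. destruct HK as (_&_&_&_&_&K4).
  replace Q with (setU A Q). apply K4; auto.
  apply seteq; intros v; unfold setU; split; [intros [H|H]; auto | auto]. Qed.

Lemma K_noempty (K : sdos X) : coherent_K K -> ~ K (empty_oset X).
Proof. intros HK H. pose proof HK as (_&_&K1&_&_&K4). apply K1.
  apply (K_super K HK (empty_oset X)); auto. apply fin_single. intros v []. Qed.

Lemma step (K : sdos X) (HK : coherent_K K) A u v : finite_oset A -> u <> v ->
  K (D A u) -> K (D A v) -> K (D (setD A (single v)) u).
Proof.
  intros HA Huv Hu Hv.
  pose proof HK as (Kfin&K0&K1&K2&K3&K4).
  set (l1 := fun (_ _ : V X) => 1).
  set (l2 := fun (a _ : V X) => if excluded_middle_informative (a = vsub v u) then 1 else 0).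
  assert (Hc : K (combo (D A u) (D A v) l1 l2)).
  { apply K3; auto. intros a b _ _. unfold R2plus, l1, l2.
    destruct (excluded_middle_informative _); lra. }
  apply K0 in Hc.
  eapply K_super; [exact HK | exact Hc | |].
  - apply fin_sub with (shift (setD A (single v)) u).
    + apply fin_shift; apply fin_sub with A; [auto| intros w [Hw _]; exact Hw].
    + intros w [Hw _]; exact Hw.
  - intros w [Hw Hw0]. destruct Hw as (a & b & Ha & Hb & Ew). rewrite Ew in Hw0 |- *.
    destruct Ha as [[wa [HwaA Ea]] Ha0]. destruct Hb as [[wb [HwbA Eb]] Hb0].
    split; [| exact Hw0].
    unfold l1, l2. destruct (excluded_middle_informative (a = vsub v u)) as [E|E].
    + exists wb. split.
      * split; [exact HwbA|]. intro Hbv. apply Hb0. unfold single in Hbv. unfold single.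
        rewrite Eb, Hbv. apply vext; intros x; unfold vsub, vzero; ring.
      * rewrite E, Eb. apply vext; intro x. unfold vlc, vsub. ring.
    + exists wa. split.
      * split; [exact HwaA|]. intro Hav; unfold single in Hav. apply E. rewrite Ea, Hav. reflexivity.
      * rewrite Ea. apply vext; intro x; unfold vlc, vsub; ring.
Qed.

Lemma removal (K : sdos X) (HK : coherent_K K) u : forall l A B, finite_oset A -> subset B A ->
  (forall w, A w -> ~ B w -> In w l) -> (forall w, A w -> ~ B w -> K (D A w)) ->
  B u -> K (D A u) -> K (D B u).
Proof.
  induction l as [|v l IH]; intros A B HA HBA Hin Hrej Hu HKu.
  - replace B with A; auto. apply seteq; intros w; split; [|apply HBA].
    intros Hw; destruct (classic (B w)) as [H|H]; [exact H| destruct (Hin w Hw H)].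
  - destruct (classic (A v /\ ~ B v)) as [[HAv HBv]|Hv].
    + apply (IH (setD A (single v)) B).
      * apply fin_sub with A; auto. intros w [Hw _]; exact Hw.
      * intros w Hw; split; [apply HBA; auto | intros E; unfold single in E; rewrite E in Hw; contradiction].
      * intros w [HwA Hwv] HwB. destruct (Hin w HwA HwB) as [E|E];
          [exfalso; apply Hwv; unfold single; symmetry; exact E | exact E].
      * intros w [HwA Hwv] HwB. apply step; auto.
        all: try (intros E; apply Hwv; unfold single; exact E).
      * exact Hu.
      * apply step; auto. intros E; apply HBv; rewrite <- E; exact Hu.
    + apply (IH A B); auto. intros w HwA HwB. destruct (Hin w HwA HwB) as [E|E];
        [exfalso; apply Hv; rewrite E; auto | exact E].
Qed.

Lemma KC_CK (K : sdos X) A : finite_oset A -> KC (CK K) A <-> K (setD A (single vzero)).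
Proof. intros HA. unfold KC, CK. rewrite shift0.
  replace (setD (setU A (single vzero)) (single vzero)) with (setD A (single vzero)).
  - split.
    + intros [_ H]. apply NNPP; intro Hn; apply H; split; auto. right; reflexivity.
    + intros H; split; auto. intros [_ Hn]; contradiction.
  - apply seteq; intros w; unfold setD, setU; split.
    + intros [H1 H2]; auto.
    + intros [[H1|H1] H2]; [auto | contradiction].
Qed.

Lemma L1 (K : sdos X) : coherent_K K -> coherent_choice (CK K).
Proof.
  intros HK. pose proof HK as (Kfin&K0&K1&K2&K3&K4).
  split; [|split; [|split; [|split; [|split]]]].
  - intros A _ u [H _]; exact H.
  - intros A HA [u0 Hu0]. destruct (classic (exists u, CK K A u)) as [H|H]; [exact H|]. exfalso.
    assert (Hall: forall w, A w -> K (D A w)).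
    { intros w Hw. apply NNPP; intro Hn; apply H; exists w; split; auto. }
    pose proof HA as [l Hl]. apply (K_noempty K HK).
    replace (empty_oset X) with (D (single u0) u0).
    + apply (removal K HK u0 l A (single u0)); auto.
      * intros w Hw; unfold single in Hw; rewrite Hw; auto.
      * intros w Hw _; apply Hl; auto.
      * reflexivity.
    + apply seteq; intros w; split; [|intros []].
      intros [[v [Hv ->]] Hn]; apply Hn; unfold single in Hv; rewrite Hv; unfold single.
      apply vext; intros x; unfold vsub, vzero; ring.
  - intros A u HA Hu. unfold CK. rewrite shift0. split; intros [_ H]; split; auto.
    exists u; split; auto. apply vext; intros x; unfold vsub, vzero; ring.
  - intros u Hu. split; [apply fin_single|]. intros [_ H]. apply H. rewrite shift0.
    replace (setD (setU (single u) (single vzero)) (single vzero)) with (single u).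
    + apply K2; auto.
    + destruct Hu as [_ Hu0]. apply seteq; intros w; unfold setD, setU, single; split.
      * intros ->; split; [left; reflexivity| intros E; apply Hu0; symmetry; exact E].
      * intros [[H1|H1] H2]; [exact H1| contradiction].
  - intros A B l1 l2 HA HB Hl. destruct HA as [HAf HA']. destruct HB as [HBf HB'].
    assert (HA : KC (CK K) A) by (split; auto). assert (HB : KC (CK K) B) by (split; auto).
    apply KC_CK in HA; auto. apply KC_CK in HB; auto.
    apply KC_CK; [apply fin_combo; auto|].
    assert (Hc := K3 _ _ l1 l2 HA HB (fun u v Hu Hv => Hl u v (proj1 Hu) (proj1 Hv))).
    apply K0 in Hc. eapply K_super; [exact HK| exact Hc| |].
    + apply fin_sub with (combo A B l1 l2); [apply fin_combo; auto| intros w [Hw _]; exact Hw].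
    + intros w [(a&b&[Ha _]&[Hb _]&Ew) Hn]. split; auto. exists a, b; auto.
  - intros A B HA HB HAB u [HuA HnC]. split; [apply HAB; auto|]. intros [_ HnK]. apply HnK.
    assert (HKu : K (D A u)) by (apply NNPP; intro Hn; apply HnC; split; auto).
    eapply K_super; [exact HK | exact HKu | |].
    + apply fin_sub with (shift B u); [apply fin_shift; auto| intros w [Hw _]; exact Hw].
    + intros w [[v [Hv ->]] Hn]. split; auto. exists v; split; auto.
Qed.

Lemma L2 (C' : oset X -> oset X) : coherent_choice C' -> coherent_K (KC C').
Proof.
  intros (Hch&C0&C1&C2&C3&C4).
  split; [|split; [|split; [|split; [|split]]]].
  - intros A [H _]; exact H.
  - intros A [HA Hn]. split; [apply fin_sub with A; auto; intros w [Hw _]; exact Hw|].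
    replace (setU (setD A (single vzero)) (single vzero)) with (setU A (single vzero)); auto.
    apply seteq; intros w; unfold setU, setD, single; split.
    + intros [H|H]; [destruct (classic (w = vzero)); auto | auto].
    + intros [[H _]|H]; auto.
  - intros [_ Hn].
    assert (Hf : finite_oset (setU (single (@vzero X)) (single vzero))) by (apply fin_U; apply fin_single).
    destruct (C0 _ Hf) as [v Hv]. { exists vzero; left; reflexivity. }
    pose proof (Hch _ Hf v Hv) as Hv'. assert (v = vzero) by (destruct Hv'; auto).
    subst v; contradiction.
  - exact C2.
  - exact C3.
  - intros A Q [HA Hn] HQ. split; [apply fin_U; auto|]. intro Hc.
    assert (Hr : rej C' (setU A (single vzero)) vzero) by (split; [right; reflexivity | exact Hn]).
    apply C4 with (B := setU (setU A Q) (single vzero)) in Hr.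
    + destruct Hr as [_ Hr]; contradiction.
    + apply fin_U; [auto| apply fin_single].
    + apply fin_U; [apply fin_U; auto| apply fin_single].
    + intros w [H|H]; [left; left; auto| right; auto].
Qed.

Lemma T (C' : oset X -> oset X) : coherent_choice C' -> forall A u, finite_oset A -> A u ->
  (C' A u <-> ~ KC C' (D A u)).
Proof.
  intros HC A u HA Hu. pose proof HC as (Hch&C0&C1&C2&C3&C4).
  unfold KC.
  replace (setU (D A u) (single vzero)) with (shift A u).
  - rewrite (C1 A u HA Hu). split.
    + intros H [_ Hn]; contradiction.
    + intros H. apply NNPP; intro Hn; apply H; split; auto.
      apply fin_sub with (shift A u); [apply fin_shift; auto| intros w [Hw _]; exact Hw].
  - apply seteq; intros w; unfold setU, setD, single; split.
    + intros Hw; destruct (classic (w = vzero)); auto.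
    + intros [[H _]|H]; auto. exists u; split; auto. rewrite H.
      apply vext; intros x; unfold vsub, vzero; ring.
Qed.

Lemma domAC (C C' : oset X -> oset X) : choice_fun C -> coherent_choice C' -> dominated C' C ->
  forall B, AC C B -> KC C' B.
Proof.
  intros HchC HC Hdom B (A & u & HA & [HuA HnCu] & ->).
  pose proof (L2 C' HC) as HK.
  assert (Hr : forall w, A w -> ~ C A w -> KC C' (D A w)).
  { intros w Hw Hn. apply NNPP; intro H. apply (T C' HC A w HA Hw) in H. apply Hn, Hdom; auto. }
  pose proof HA as [l Hl].
  assert (HB0 : KC C' (D (setU (C A) (single u)) u)).
  { apply (removal _ HK u l A); auto.
    - intros w [Hw|Hw]; [apply HchC; auto| unfold single in Hw; rewrite Hw; auto].
    - intros w Hw _; apply Hl; auto.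
    - intros w Hw Hn; apply Hr; auto. intro Hc; apply Hn; left; auto.
    - right; reflexivity. }
  replace (shift (C A) u) with (D (setU (C A) (single u)) u); auto.
  apply seteq; intros w; split.
  - intros [[v [[Hv|Hv] ->]] Hn].
    + exists v; auto.
    + exfalso; apply Hn; unfold single in Hv |- *; rewrite Hv. apply vext; intros x; unfold vsub, vzero; ring.
  - intros [v [Hv ->]]. split.
    + exists v; split; [left|]; auto.
    + intro E. unfold single in E. apply vsub0 in E. rewrite E in Hv. contradiction.
Qed.

Lemma domfromAC (C : oset X -> oset X) (K : sdos X) : choice_fun C -> coherent_K K ->
  (forall B, AC C B -> K B) -> dominated (CK K) C.
Proof.
  intros HchC HK HKA A HA u [HuA HnK]. apply NNPP; intro HnC. apply HnK.
  assert (H : K (shift (C A) u)) by (apply HKA; exists A, u; repeat split; auto).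
  eapply K_super; [exact HK | exact H | |].
  - apply fin_sub with (shift A u); [apply fin_shift; auto| intros w [Hw _]; exact Hw].
  - intros w [v [Hv ->]]. split.
    + exists v; split; [apply HchC|]; auto.
    + intro E; unfold single in E; apply vsub0 in E. rewrite E in Hv; contradiction.
Qed.

End Main.

Theorem theorem4 (X : Type) (hX : inhabited X) (C : oset X -> oset X) :
  choice_fun C ->
  (consistent C <-> ~ ExA (AC C) (empty_oset X)) /\
  (consistent C -> forall A, finite_oset A -> CK (ExA (AC C)) A = ExC C A).
Proof.
  intros HchC. split.
  - split.
    + intros [C' [HC' Hdom]] [Hfin Hall]. apply (K_noempty X (KC C') (L2 X C' HC')).
      apply Hall; [apply L2; auto | apply domAC; auto].
    + intros Hn.
      destruct (classic (exists K, coherent_K K /\ (forall A, AC C A -> K A))) as [[K [HK HKA]]|Hno].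
      * exists (CK K); split; [apply L1; auto | apply domfromAC; auto].
      * exfalso; apply Hn; split; [apply fin_empty|]. intros K HK HKA; exfalso; apply Hno; eauto.
  - intros _ A HA. apply seteq; intros u. split.
    + intros [HuA HnE].
      destruct (classic (exists K, coherent_K K /\ (forall B, AC C B -> K B) /\
                  ~ K (setD (shift A u) (single vzero)))) as [[K [HK [HKA HnK]]]|Hno].
      * exists (CK K). split; [apply L1; auto|split; [apply domfromAC; auto| split; auto]].
      * exfalso; apply HnE; split.
        -- apply fin_sub with (shift A u); [apply fin_shift; auto| intros w [Hw _]; exact Hw].
        -- intros K HK HKA. apply NNPP; intro; apply Hno; eauto.
    + intros [C' [HC' [Hdom HC'u]]].
      assert (HuA : A u) by (apply (proj1 HC'); auto).
      split; auto. intros [_ Hall].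
      specialize (Hall (KC C') (L2 X C' HC') (domAC X C C' HchC HC' Hdom)).
      apply (T X C' HC' A u HA HuA) in HC'u. contradiction.
Qed.
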